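(* Let $p$ be a prime, let $$\Gamma = \left\{ \begin{pmatrix}1&x_{12}&x_{13}&x_{14}\\ 0 &p^k&x_{23}&x_{24}\\0&0&p^n&x_{34}\\0&0&0&1 \end{pmatrix} : x_{ij}\in \mathbb Z[1/p], \ k, n\in \mathbb Z\right\}$$ (Abels's group) and let $N\le\Gamma$ be the central subgroup of matrices of the form $I+xE_{14}$ with $x\in\mathbb Z$ (identity matrix with $x$ in the $(1,4)$ entry). Then the amalgamated free product $\Gamma \ast_{N=N} \Gamma$ is not maximally almost periodic.
   Context: A group is maximally almost periodic (MAP) if its finite-dimensional unitary representations separate its points. $\Gamma\ast_{N=N}\Gamma$ denotes the free product of two copies of $\Gamma$ amalgamated along the identity map of $N$. *)

(* Defs.v *)
From HB Require Import structures.
From mathcomp Require Import all_boot all_order all_algebra.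
From mathcomp Require Import complex.
From mathcomp Require Import Rstruct.
Set Implicit Arguments. Unset Strict Implicit. Unset Printing Implicit Defensive.
Import Order.TTheory GRing.Theory Num.Theory.
Local Open Scope ring_scope.

Definition Cplx : numClosedFieldType := (Rdefinitions.R)[i].

Definition zinvp (p : nat) (x : rat) : Prop :=
  exists (m : nat) (z : int), x = z%:~R / (p%:R ^+ m).

Definition inGamma (p : nat) (A : 'M[rat]_4) : Prop :=
  (exists k n : int,
      A (inord 0) (inord 0) = 1 /\ A (inord 1) (inord 1) = (p%:R : rat) ^ k /\
      A (inord 2) (inord 2) = (p%:R : rat) ^ n /\ A (inord 3) (inord 3) = 1) /\
  (forall i j : 'I_4, (j < i)%N -> A i j = 0) /\
  (forall i j : 'I_4, (i < j)%N -> zinvp p (A i j)).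

Definition inN (A : 'M[rat]_4) : Prop :=
  exists z : int, A = 1%:M + z%:~R *: delta_mx (inord 0) (inord 3).

(* Words in the free product of two copies of Gamma: letters (b, g) with
   b : bool indicating the copy (true = first, false = second). *)
Definition word := seq (bool * 'M[rat]_4).

Definition valid_word (p : nat) (w : word) : Prop :=
  forall l, l \in w -> inGamma p l.2.

(* The congruence defining Gamma *_{N=N} Gamma on words. *)
Inductive amal_eq (p : nat) : word -> word -> Prop :=
| ae_refl w : amal_eq p w w
| ae_sym w w' : amal_eq p w w' -> amal_eq p w' w
| ae_trans w1 w2 w3 : amal_eq p w1 w2 -> amal_eq p w2 w3 -> amal_eq p w1 w3
| ae_mul (u v : word) (b : bool) (g h : 'M[rat]_4) :
    inGamma p g -> inGamma p h ->
    amal_eq p (u ++ (b, g) :: (b, h) :: v) (u ++ (b, g *m h) :: v)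
| ae_one (u v : word) (b : bool) :
    amal_eq p (u ++ (b, 1%:M) :: v) (u ++ v)
| ae_amalg (u v : word) (x : 'M[rat]_4) :
    inN x -> amal_eq p (u ++ (true, x) :: v) (u ++ (false, x) :: v).

Definition unitary (n : nat) (U : 'M[Cplx]_n) : Prop :=
  U *m (map_mx (fun z : Cplx => z^*) U)^T = 1%:M.

(* n-dimensional unitary representation of the amalgam (words modulo amal_eq,
   multiplication = concatenation) *)
Definition amal_rep (p n : nat) (f : word -> 'M[Cplx]_n) : Prop :=
  (forall w w', valid_word p w -> valid_word p w' -> amal_eq p w w' -> f w = f w') /\
  (forall w w', valid_word p w -> valid_word p w' -> f (w ++ w') = f w *m f w') /\
  (forall w, valid_word p w -> unitary (f w)).

(* Gamma *_{N=N} Gamma is maximally almost periodic: finite-dimensional unitary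
   representations separate points (equivalently, detect every nontrivial element). *)
Definition amalgam_MAP (p : nat) : Prop :=
  forall w : word, valid_word p w -> ~ amal_eq p w [::] ->
    exists (n : nat) (f : word -> 'M[Cplx]_n), amal_rep p f /\ f w <> 1%:M.

(* Main.v *)
Require Import Defs.
From mathcomp Require Import all_boot all_order all_algebra.
From mathcomp Require Import ring spectral sesquilinear.
Set Implicit Arguments. Unset Strict Implicit. Unset Printing Implicit Defensive.
Import Order.TTheory GRing.Theory Num.Theory.
Local Open Scope ring_scope.

Definition E (i j : nat) : 'M[rat]_4 := delta_mx (inord i) (inord j).
Definition el (i j : nat) (x : rat) : 'M[rat]_4 := 1%:M + x *: E i j.

Lemma ord4 (r : 'I_4) : [\/ r = inord 0, r = inord 1, r = inord 2 | r = inord 3].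
Proof.
case: r => [[|[|[|[|m]]]] Hm] //; [apply: Or41|apply: Or42|apply: Or43|apply: Or44];
  by apply: val_inj; rewrite /= inordK.
Qed.

Lemma inE4 a b : (a < 4)%N -> (b < 4)%N -> (inord a == inord b :> 'I_4) = (a == b).
Proof. by move=> Ha Hb; rewrite -val_eqE /= !inordK. Qed.

Lemma sum4 (F : 'I_4 -> rat) : \sum_k F k = F (inord 0) + F (inord 1) + F (inord 2) + F (inord 3).
Proof.
rewrite !big_ord_recr big_ord0 /= add0r.
by congr (F _ + F _ + F _ + F _); apply: val_inj; rewrite /= inordK.
Qed.

Ltac alg1 := rewrite ?mulmxDl ?mulmxDr ?mul1mx ?mulmx1 ?mul0mx ?mulmx0 -?scalemxAl -?scalemxAr ?scalerA
   ?mul_delta_mx_cond ?inE4 //= ?mulr0n ?mulr1n ?scaler0 ?scale0r ?addr0 ?add0r.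
Ltac fin := apply/matrixP; intros r c; rewrite !mxE; case: (ord4 r) => ->; case: (ord4 c) => ->;
  rewrite ?inE4 //=.
Ltac brute := rewrite /el /E; do 3 alg1; fin.

Lemma comm_id x y : el 0 1 x *m el 1 3 y *m el 0 1 (-x) *m el 1 3 (-y) = el 0 3 (x * y).
Proof. brute. all: ring. Qed.

Section Gam.
Variable p : nat.
Hypothesis p_gt0 : (0 < p)%N.

Lemma pR_neq0 : (p%:R : rat) != 0.
Proof. by rewrite pnatr_eq0 -lt0n. Qed.

Lemma castX k : (((p ^ k)%N : int)%:~R : rat) = (p%:R : rat) ^+ k.
Proof. by rewrite -natrX. Qed.

Lemma zinvp0 : zinvp p 0.
Proof. by exists 0%N, 0; rewrite mul0r. Qed.

Lemma zinvp_int (z : int) : zinvp p z%:~R.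
Proof. by exists 0%N, z; rewrite expr0 divr1. Qed.

Lemma zinvpD x y : zinvp p x -> zinvp p y -> zinvp p (x + y).
Proof.
move=> [m1 [z1 ->]] [m2 [z2 ->]].
exists (m1 + m2)%N, (z1 * (p ^ m2)%N + z2 * (p ^ m1)%N).
have H1 := expf_neq0 m1 pR_neq0; have H2 := expf_neq0 m2 pR_neq0.
rewrite intrD !intrM !castX exprD; field.
by rewrite H1 H2.
Qed.

Lemma zinvpM x y : zinvp p x -> zinvp p y -> zinvp p (x * y).
Proof.
move=> [m1 [z1 ->]] [m2 [z2 ->]].
exists (m1 + m2)%N, (z1 * z2).
have H1 := expf_neq0 m1 pR_neq0; have H2 := expf_neq0 m2 pR_neq0.
rewrite !intrM exprD; field.
by rewrite H1 H2.
Qed.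

Lemma zinvpN x : zinvp p x -> zinvp p (- x).
Proof. by move=> [m [z ->]]; exists m, (- z); rewrite intrN mulNr. Qed.

Lemma zinvpX (k : int) : zinvp p ((p%:R : rat) ^ k).
Proof.
case: k => m.
  by exists 0%N, (p ^ m)%N; rewrite castX expr0 divr1.
by exists m.+1, 1; rewrite mul1r.
Qed.

Lemma zinvp_sum (F : 'I_4 -> rat) : (forall k, zinvp p (F k)) -> zinvp p (\sum_k F k).
Proof.
move=> H; elim/big_ind: _ => //; first exact: zinvp0.
exact: zinvpD.
Qed.

Definition LT (g : 'M[rat]_4) := forall i j : 'I_4, (j < i)%N -> g i j = 0.

Lemma mul_LT g h : LT g -> LT h -> LT (g *m h).
Proof.
move=> Hg Hh i j ji; rewrite mxE big1 // => k _.
case: (ltnP k i) => [ki|ik]; first by rewrite (Hg i k ki) mul0r.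
by rewrite (Hh k j) ?mulr0 //; apply: leq_trans ji ik.
Qed.

Lemma diag_mul g h i : LT g -> LT h -> (g *m h) i i = g i i * h i i.
Proof.
move=> Hg Hh; rewrite mxE (bigD1 i) //= big1 ?addr0 // => k ki.
case: (ltngtP k i) => [lt|gt|eq].
- by rewrite (Hg i k lt) mul0r.
- by rewrite (Hh k i gt) mulr0.
- by move: ki; rewrite (val_inj eq) eqxx.
Qed.

Lemma Gamma_LT g : inGamma p g -> LT g.
Proof. by case=> _ []. Qed.

Lemma Gamma_entries g : inGamma p g -> forall i j, zinvp p (g i j).
Proof.
move=> [[k [n [H0 [H1 [H2 H3]]]]] [Hl Hu]] i j.
case: (ltngtP i j) => [ij|ji|eij]; first exact: Hu.
  by rewrite Hl //; apply: zinvp0.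
have -> : j = i by apply: val_inj.
case: (ord4 i) => ->; rewrite ?H0 ?H1 ?H2 ?H3;
  first [exact: zinvpX | by rewrite -(expr0z (p%:R : rat)); apply: zinvpX].
Qed.

Lemma Gamma_mul g h : inGamma p g -> inGamma p h -> inGamma p (g *m h).
Proof.
move=> Gg Gh.
have Lg := Gamma_LT Gg; have Lh := Gamma_LT Gh.
have Eg := Gamma_entries Gg; have Eh := Gamma_entries Gh.
case: Gg => [[k [n [G0 [G1 [G2 G3]]]]] _].
case: Gh => [[k' [n' [H0 [H1 [H2 H3]]]]] _].
split; last split.
- exists (k + k'), (n + n').
  rewrite !diag_mul // G0 G1 G2 G3 H0 H1 H2 H3 !mulr1 !expfzDr //; exact: pR_neq0.
- exact: mul_LT.
- move=> i j _; rewrite mxE; apply: zinvp_sum => l; apply: zinvpM; [exact: Eg|exact: Eh].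
Qed.

Lemma Gamma_el i j x : (j < 4)%N -> (i < j)%N -> zinvp p x -> inGamma p (el i j x).
Proof.
move=> j4 ij Hx; have i4 : (i < 4)%N by apply: ltn_trans ij j4.
have ne : forall m, ((m == i) && (m == j))%N = false.
  by move=> m; case: eqP => // ->; rewrite ltn_eqF.
split; last split.
- exists 0, 0; rewrite /el /E !mxE !inE4 // !ne !eqxx !expr0z /= !mulr0 !addr0; do !split.
- move=> r s sr; rewrite /el /E !mxE.
  rewrite (_ : (r == s) = false); last by apply/negbTE; rewrite -val_eqE /= gtn_eqF.
  case: (eqVneq r (inord i)) => [ri|]; case: (eqVneq s (inord j)) => [sj|] /=;
    rewrite ?mulr0 ?addr0 //.
  by move: sr; rewrite ri sj !inordK // ltnNge ltnW.
- move=> r s rs; rewrite /el /E !mxE.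
  rewrite (_ : (r == s) = false); last by apply/negbTE; rewrite -val_eqE /= ltn_eqF.
  by case: (_ && _); rewrite /= add0r ?mulr1 ?mulr0 //; apply: zinvp0.
Qed.

Lemma Gamma_d (u : rat) (k : int) : 1 + u = (p%:R : rat) ^ k -> zinvp p u ->
  inGamma p (el 1 1 u).
Proof.
move=> Hu Hz.
split; last split.
- exists k, 0; rewrite /el /E !mxE !inE4 //= !expr0z; split; first by ring.
  split; first by rewrite mulr1 Hu.
  by rewrite !mulr0 !addr0; do !split.
- move=> r s sr; rewrite /el /E !mxE.
  rewrite (_ : (r == s) = false); last by apply/negbTE; rewrite -val_eqE /= gtn_eqF.
  case: (eqVneq r (inord 1)) => [ri|]; case: (eqVneq s (inord 1)) => [sj|] /=;
    rewrite ?mulr0 ?addr0 //.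
  by move: sr; rewrite ri sj ltnn.
- move=> r s rs; rewrite /el /E !mxE.
  rewrite (_ : (r == s) = false); last by apply/negbTE; rewrite -val_eqE /= ltn_eqF.
  case: (eqVneq r (inord 1)) => [ri|rn] /=; last by rewrite mulr0 addr0; exact: zinvp0.
  case: (eqVneq s (inord 1)) => [sj|sn] /=; last by rewrite mulr0 addr0; exact: zinvp0.
  by move: rs; rewrite ri sj ltnn.
Qed.

Lemma Gamma1 : inGamma p 1%:M.
Proof.
have -> : (1%:M : 'M[rat]_4) = el 0 1 0 by rewrite /el scale0r addr0.
by apply: Gamma_el => //; apply: zinvp0.
Qed.

End Gam.

Lemma el01_mul x y : el 0 1 x *m el 0 1 y = el 0 1 (x + y).
Proof. brute; ring. Qed.
Lemma el03_mul x y : el 0 3 x *m el 0 3 y = el 0 3 (x + y).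
Proof. brute; ring. Qed.
Lemma el13_mul x y : el 1 3 x *m el 1 3 y = el 1 3 (x + y).
Proof. brute; ring. Qed.
Lemma el11_mul u v : el 1 1 u *m el 1 1 v = el 1 1 (u + v + u * v).
Proof. brute; ring. Qed.
Lemma conj_id u v x :
  el 1 1 u *m el 0 1 x *m el 1 1 v = el 0 1 (x * (1 + v)) + (u + v + u * v) *: E 1 1.
Proof. brute; ring. Qed.

Lemma el0 i j : el i j 0 = 1%:M.
Proof. by rewrite /el scale0r addr0. Qed.

Lemma el01X x m : el 0 1 x ^+ m = el 0 1 (x *+ m).
Proof.
elim: m => [|m IH]; first by rewrite expr0 mulr0n el0.
by rewrite exprSr IH -mulmxE el01_mul mulrSr.
Qed.

Lemma el03X x m : el 0 3 x ^+ m = el 0 3 (x *+ m).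
Proof.
elim: m => [|m IH]; first by rewrite expr0 mulr0n el0.
by rewrite exprSr IH -mulmxE el03_mul mulrSr.
Qed.

Definition Tb (g : 'M[rat]_4) : bool :=
  [&& g (inord 0) (inord 0) == 1, g (inord 3) (inord 3) == 1 &
      [forall i : 'I_4, [forall j : 'I_4, (j < i)%N ==> (g i j == 0)]]].

Lemma TbP g : Tb g <-> [/\ g (inord 0) (inord 0) = 1, g (inord 3) (inord 3) = 1 & LT g].
Proof.
split.
  case/and3P => /eqP -> /eqP -> /forallP H; split => // i j ji.
  by move: (H i) => /forallP /(_ j) /implyP /(_ ji) /eqP.
case=> H0 H3 HL; apply/and3P; split; try by apply/eqP.
by apply/forallP => i; apply/forallP => j; apply/implyP => ji; apply/eqP/HL.
Qed.

Lemma Tb_mul g h : Tb g -> Tb h -> Tb (g *m h).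
Proof.
move=> /TbP [G0 G3 GL] /TbP [H0 H3 HL]; apply/TbP; split.
- by rewrite diag_mul // G0 H0 mulr1.
- by rewrite diag_mul // G3 H3 mulr1.
- exact: mul_LT.
Qed.

Lemma Tb1 : Tb 1%:M.
Proof.
apply/TbP; split; rewrite ?mxE ?eqxx //.
by move=> i j ji; rewrite mxE (_ : (i == j) = false) //; apply/negbTE; rewrite -val_eqE /= gtn_eqF.
Qed.

Lemma Tb_central g z : Tb g -> el 0 3 z *m g = g *m el 0 3 z.
Proof.
move=> /TbP [G0 G3 GL].
have z10 : g (inord 1) (inord 0) = 0 by apply: GL; rewrite !inordK.
have z20 : g (inord 2) (inord 0) = 0 by apply: GL; rewrite !inordK.
have z30 : g (inord 3) (inord 0) = 0 by apply: GL; rewrite !inordK.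
have z31 : g (inord 3) (inord 1) = 0 by apply: GL; rewrite !inordK.
have z32 : g (inord 3) (inord 2) = 0 by apply: GL; rewrite !inordK.
rewrite /el mulmxDl mulmxDr mul1mx mulmx1 -scalemxAl -scalemxAr; congr (_ + _ *: _).
apply/matrixP => r c; rewrite !mxE !sum4 !mxE ?inE4 //=.
case: (ord4 r) => ->; case: (ord4 c) => ->; rewrite ?inE4 //= ?G0 ?G3 ?z10 ?z20 ?z30 ?z31 ?z32; ring.
Qed.

Section Gam2.
Variable p : nat.
Hypothesis p_gt0 : (0 < p)%N.
Let pr : rat := p%:R.

Lemma Tb_Gamma g : inGamma p g -> Tb g.
Proof.
move=> Gg; have L := Gamma_LT Gg.
case: Gg => [[k [n [G0 [G1 [G2 G3]]]]] _].
by apply/TbP; split.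
Qed.

Definition ga := el 0 1 pr^-1.
Definition gai := el 0 1 (- pr^-1).
Definition gb := el 1 3 1.
Definition gbi := el 1 3 (-1).
Definition gd := el 1 1 (pr^-1 - 1).
Definition gdi := el 1 1 (pr - 1).
Definition gc := el 0 3 pr^-1.
Definition gci := el 0 3 (- pr^-1).
Definition gn := el 0 3 1.

Lemma zinvp_pinv : zinvp p pr^-1.
Proof. by rewrite -exprN1; apply: zinvpX. Qed.

Lemma Gamma_ga : inGamma p ga.
Proof. apply: Gamma_el => //. exact: zinvp_pinv. Qed.
Lemma Gamma_gai : inGamma p gai.
Proof. by apply: Gamma_el => //; apply: zinvpN; exact: zinvp_pinv. Qed.
Lemma Gamma_gb : inGamma p gb.
Proof. by apply: Gamma_el => //; apply: (zinvp_int p 1). Qed.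
Lemma Gamma_gbi : inGamma p gbi.
Proof. by apply: Gamma_el => //; apply: (zinvp_int p (-1)). Qed.
Lemma Gamma_gc : inGamma p gc.
Proof. by apply: Gamma_el => //; apply: zinvp_pinv. Qed.
Lemma Gamma_gci : inGamma p gci.
Proof. by apply: Gamma_el => //; apply: zinvpN; exact: zinvp_pinv. Qed.
Lemma Gamma_gn : inGamma p gn.
Proof. by apply: Gamma_el => //; apply: (zinvp_int p 1). Qed.
Lemma Gamma_gd : inGamma p gd.
Proof.
apply: (@Gamma_d p (pr^-1 - 1) (-1)); first by rewrite exprN1; ring.
apply: (zinvpD p_gt0); first exact: zinvp_pinv.
exact: (zinvp_int p (-1)).
Qed.
Lemma Gamma_gdi : inGamma p gdi.
Proof.
apply: (@Gamma_d p (pr - 1) 1); first by rewrite expr1z; ring.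
apply: (zinvpD p_gt0); first exact: (zinvp_int p p).
exact: (zinvp_int p (-1)).
Qed.

Lemma pr_neq0 : pr != 0.
Proof. exact: pR_neq0. Qed.

Lemma ga_gai : ga *m gai = 1%:M.
Proof. by rewrite /ga /gai el01_mul subrr el0. Qed.
Lemma gai_ga : gai *m ga = 1%:M.
Proof. by rewrite /ga /gai el01_mul addrC subrr el0. Qed.
Lemma gc_gci : gc *m gci = 1%:M.
Proof. by rewrite /gc /gci el03_mul subrr el0. Qed.
Lemma gdi_gd : gdi *m gd = 1%:M.
Proof.
have H : (pr - 1) + (pr^-1 - 1) + (pr - 1) * (pr^-1 - 1) = 0.
  by field; try exact: pr_neq0.
by rewrite /gd /gdi el11_mul H el0.
Qed.
Lemma gd_conj : gd *m ga *m gdi = ga ^+ p.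
Proof.
have H : (pr^-1 - 1) + (pr - 1) + (pr^-1 - 1) * (pr - 1) = 0.
  by field; try exact: pr_neq0.
rewrite /gd /gdi /ga conj_id H.
rewrite scale0r addr0 el01X; congr el; rewrite -mulr_natr /pr; ring.
Qed.
Lemma gc_pow m : gc ^+ m = ga ^+ m *m gb *m gai ^+ m *m gbi.
Proof.
rewrite /gc /ga /gai /gb /gbi el03X !el01X mulNrn.
by rewrite comm_id mulr1.
Qed.
Lemma gc_p : gc ^+ p = gn.
Proof.
rewrite /gc /gn el03X; congr el; rewrite -mulr_natr mulVf //; exact: pr_neq0.
Qed.
Lemma inN_gn : inN gn.
Proof. by exists 1. Qed.

End Gam2.

Definition Fprod (w : word) : 'M[rat]_4 :=
  foldr (fun l acc => (if l.1 && Tb l.2 then l.2 else 1%:M) *m acc) 1%:M w.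

Lemma Fprod_cat u v : Fprod (u ++ v) = Fprod u *m Fprod v.
Proof. elim: u => [|l u IH] /=; first by rewrite mul1mx. by rewrite IH mulmxA. Qed.

Lemma Fprod_Tb w : Tb (Fprod w).
Proof.
elim: w => [|l w IH] /=; first exact: Tb1.
apply: Tb_mul => //; case: ifP => [/andP[] //|_]; exact: Tb1.
Qed.

Lemma int0R : ((0 : int)%:~R : rat) = 0.
Proof. by []. Qed.

Section Inv.
Variable p : nat.
Hypothesis p_gt0 : (0 < p)%N.

Definition Inv (w w' : word) := exists z : int, Fprod w = Fprod w' *m el 0 3 z%:~R.

Lemma amal_Inv w w' : amal_eq p w w' -> Inv w w'.
Proof.
elim => {w w'}.
- by move=> w; exists 0; rewrite int0R el0 mulmx1.
- move=> w w' _ [z Hz]; exists (- z).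
  by rewrite Hz -mulmxA el03_mul intrN subrr el0 mulmx1.
- move=> w1 w2 w3 _ [z1 H1] _ [z2 H2]; exists (z2 + z1).
  by rewrite H1 H2 -mulmxA el03_mul intrD.
- move=> u v b g h Gg Gh; exists 0; rewrite int0R el0 mulmx1 !Fprod_cat /=.
  case: b => /=; last by rewrite !mul1mx.
  rewrite (Tb_Gamma Gg) (Tb_Gamma Gh) /=.
  by rewrite (Tb_Gamma (Gamma_mul p_gt0 Gg Gh)) /= !mulmxA.
- move=> u v b; exists 0; rewrite int0R el0 mulmx1 !Fprod_cat /=.
  by case: b => /=; rewrite ?Tb1 mul1mx.
- move=> u v x [z ->]; exists z; rewrite !Fprod_cat /=.
  have -> : 1%:M + z%:~R *: delta_mx (inord 0) (inord 3) = el 0 3 z%:~R by [].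
  have -> : Tb (el 0 3 z%:~R).
    by apply: (@Tb_Gamma p); apply: Gamma_el => //; apply: zinvp_int.
  by rewrite mul1mx Tb_central ?Fprod_Tb // mulmxA.
Qed.

Lemma w0_nontriv : prime p -> ~ amal_eq p [:: (true, gc p); (false, gci p)] [::].
Proof.
move=> pp /amal_Inv [z].
have Tc : Tb (gc p) by apply: Tb_Gamma; apply: Gamma_gc.
rewrite /= Tc /= !mulmx1 mul1mx => /matrixP /(_ (inord 0) (inord 3)).
rewrite /gc /el /E !mxE !inE4 //= !add0r !mulr1 => H.
have H2 : ((z * p%:Z)%:~R : rat) = (1 : int)%:~R.
  rewrite intrM -H mulVf //; exact: pR_neq0.
have E1 := intr_inj H2.
have := congr1 absz E1; rewrite abszM /= => /eqP; rewrite muln_eq1 => /andP [_ /eqP p1].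
by move: pp; rewrite p1.
Qed.

End Inv.

Section LA.
Local Open Scope sesquilinear_scope.
Variable C : numClosedFieldType.

Lemma diag_pow n (P : 'M[C]_n.+1) (s : 'rV[C]_n.+1) (m : nat) : P \in unitmx ->
  (invmx P *m diag_mx s *m P) ^+ m = invmx P *m diag_mx (\row_j (s 0 j) ^+ m) *m P.
Proof.
move=> uP; elim: m => [|m IH].
  rewrite expr0 (_ : \row_j _ = const_mx 1); last by apply/matrixP=> i j; rewrite !mxE expr0.
  by rewrite diag_const_mx mulmx1 mulVmx.
rewrite exprSr IH -mulmxE !mulmxA mulmxK // -(mulmxA (invmx P)) mulmx_diag.
by congr (_ *m diag_mx _ *m _); apply/matrixP=> i j; rewrite !mxE exprSr.
Qed.


Lemma pigeon (T : finType) (g : nat -> T) : exists a b, (a < b)%N /\ g a = g b.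
Proof.
pose fs := [seq g j | j <- iota 0 #|T|.+1].
have : ~~ uniq fs.
  apply/negP=> /card_uniqP; rewrite size_map size_iota => H.
  by have := max_card (mem fs); rewrite H ltnn.
case/(uniqPn (g 0%N)) => a [b [ab]]; rewrite size_map size_iota => bT.
have aT : (a < #|T|.+1)%N by apply: ltn_trans ab bT.
rewrite !(nth_map 0%N) ?size_iota // !nth_iota // !add0n => E.
by exists a, b.
Qed.

Lemma finite_orderish n (A D Di : 'M[C]_n.+1) (p : nat) :
  A *m (map_mx Num.conj A)^T = 1%:M -> Di *m D = 1%:M -> D *m A *m Di = A ^+ p ->
  exists K, (0 < K)%N /\ A ^+ (p ^ K) = A.
Proof.
move=> HA HDi HD.
have HA1 : A *m A ^t* = 1%:M.
  by rewrite -map_trmx.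
have HA2 : A ^t* *m A = 1%:M by apply: mulmx1C.
have Anorm : A \is normalmx by apply/normalmxP; rewrite HA1 HA2.
have Aeq : A = invmx (spectralmx A) *m diag_mx (spectral_diag A) *m spectralmx A.
  have H := @orthomx_spectralP C n.+1 A. simpl in H. by apply: (elimT H).
set P := spectralmx A in Aeq *; set s := spectral_diag A in Aeq *.
have uP : P \in unitmx by apply: spectral_unit.
have Apow m : A ^+ m = invmx P *m diag_mx (\row_j (s 0 j) ^+ m) *m P.
  rewrite {1}Aeq. exact: (@diag_pow n P s m uP).
have claim1 : forall i : 'I_n.+1, exists j, (s 0 j) ^+ p = s 0 i.
  move=> i. pose e : 'rV[C]_n.+1 := delta_mx 0 i.
  pose u := e *m P *m Di *m invmx P.
  have eD : e *m diag_mx s = s 0 i *: e.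
    apply/matrixP=> r k; rewrite mul_mx_diag !mxE.
    by case: (eqVneq k i) => [->|_]; [rewrite mulrC | rewrite andbF mul0r mulr0].
  have PA : P *m A = diag_mx s *m P by rewrite {1}Aeq !mulmxA mulmxV // mul1mx.
  have Dp : diag_mx (\row_j (s 0 j) ^+ p) = P *m A ^+ p *m invmx P.
    by rewrite Apow !mulmxA mulmxV // mul1mx mulmxK.
  have uD : u *m diag_mx (\row_j (s 0 j) ^+ p) = s 0 i *: u.
    rewrite Dp -HD /u !mulmxA mulmxKV // -(mulmxA _ Di D) HDi mulmx1.
    by rewrite -(mulmxA e P A) PA !mulmxA eD !scalemxAl.
  have un0 : u != 0.
    apply/eqP=> u0.
    have : u *m P *m D *m invmx P = e.
      by rewrite /u mulmxKV // -(mulmxA _ Di D) HDi mulmx1 mulmxK.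
    rewrite u0 !mul0mx => /matrixP /(_ 0 i); rewrite !mxE !eqxx /= => /eqP.
    by rewrite eq_sym oner_eq0.
  have [k uk] : exists k, u 0 k != 0.
    case: (boolP [exists k, u 0 k != 0]) => [/existsP //|]; rewrite negb_exists => /forallP H.
    exfalso; move/eqP: un0; apply; apply/matrixP => r c; rewrite ord1.
    by move: (H c); rewrite negbK => /eqP ->; rewrite mxE.
  clearbody u; exists k; move/matrixP: uD => /(_ 0 k); rewrite mul_mx_diag !mxE.
  by move=> H; apply: (mulfI uk); rewrite H mulrC.
have [psi Hpsi] := fin_all_exists claim1.
have iterP : forall k i, s 0 i = (s 0 (iter k psi i)) ^+ (p ^ k).
  move=> k i; elim: k => [|k IH]; first by rewrite expn0 expr1.
  by rewrite IH iterS expnS exprM Hpsi.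
have [a [b [ab /ffunP Hab]]] := pigeon (fun j => [ffun i => iter j psi i]).
exists (b - a)%N; split; first by rewrite subn_gt0.
rewrite Aeq diag_pow //; congr (_ *m diag_mx _ *m _); apply/matrixP=> r j.
rewrite ord1 mxE.
have Hy : s 0 (iter a psi j) = s 0 (iter a psi j) ^+ (p ^ (b - a)).
  rewrite {1}(iterP (b - a)%N) -iterD subnK; last exact: ltnW. move: (Hab j); rewrite !ffunE => ->. done.
rewrite (iterP a j) -exprM (mulnC (p ^ a)%N) exprM -Hy //.
Qed.
End LA.


Section Rep.
Variables (p n : nat) (f : word -> 'M[Cplx]_n.+1).
Hypothesis p_gt0 : (0 < p)%N.
Hypothesis Hf : amal_rep p f.

Let rho b g := f [:: (b, g)].

Lemma valid1 b g : inGamma p g -> valid_word p [:: (b, g)].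
Proof. by move=> G l; rewrite inE => /eqP ->. Qed.
Lemma valid2 b g b' h : inGamma p g -> inGamma p h -> valid_word p [:: (b, g); (b', h)].
Proof. by move=> G H l; rewrite !inE => /orP [] /eqP ->. Qed.
Lemma valid0 : valid_word p [::].
Proof. by []. Qed.

Lemma f_nil : f [::] = 1%:M.
Proof.
case: Hf => _ [Hm Hu].
have H := Hm [::] [::] valid0 valid0; rewrite /= in H.
have U := Hu [::] valid0.
have uF : f [::] \in unitmx by case: (mulmx1_unit U).
have := congr1 (mulmx (invmx (f [::]))) H.
by rewrite mulVmx // mulKmx // => E; rewrite -E.
Qed.

Lemma Gamma_pow g m : inGamma p g -> inGamma p (g ^+ m).
Proof.
move=> G; elim: m => [|m IH]; first by rewrite expr0; apply: Gamma1.
by rewrite exprSr -mulmxE; apply: Gamma_mul.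
Qed.

Lemma rho_mul b g h : inGamma p g -> inGamma p h -> rho b (g *m h) = rho b g *m rho b h.
Proof.
move=> G H; case: Hf => Hi [Hm _].
have Ggh := Gamma_mul p_gt0 G H.
rewrite /rho -(Hm [:: (b, g)] [:: (b, h)] (@valid1 b g G) (@valid1 b h H)) /=.
apply: Hi; [exact: valid1 | exact: valid2 | idtac].
exact: (@ae_sym p _ _ (@ae_mul p [::] [::] b g h G H)).
Qed.

Lemma rho1 b : rho b 1%:M = 1%:M.
Proof.
case: Hf => Hi _; rewrite /rho -f_nil.
apply: Hi; [exact: (@valid1 b _ (Gamma1 p)) | exact: valid0 | exact: (@ae_one p [::] [::] b)].
Qed.

Lemma rho_unitary b g : inGamma p g -> unitary (rho b g).
Proof. by case: Hf => _ [_ Hu] G; apply: Hu; apply: valid1. Qed.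

Lemma rho_pow b g m : inGamma p g -> rho b (g ^+ m) = rho b g ^+ m.
Proof.
move=> G; elim: m => [|m IH]; first by rewrite !expr0; apply: rho1.
by rewrite !exprSr -!mulmxE rho_mul ?IH //; apply: Gamma_pow.
Qed.

Lemma rho_amalg x : inN x -> inGamma p x -> rho true x = rho false x.
Proof.
move=> Nx Gx; case: Hf => Hi _.
apply: Hi; [exact: valid1 | exact: valid1 | exact: (@ae_amalg p [::] [::] x Nx)].
Qed.

Lemma core b : exists K, (0 < K)%N /\
  forall m, (K %| m)%N -> (0 < m)%N -> rho b (gc p) = rho b gn ^+ (p ^ m.-1)%N.
Proof.
set A := rho b (ga p); set Ai := rho b (gai p); set B := rho b gb; set Bi := rho b gbi.
have Ga := Gamma_ga p; have Gai := Gamma_gai p; have Gb := Gamma_gb p; have Gbi := Gamma_gbi p.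
have Gd : inGamma p (gd p) by apply: Gamma_gd.
have Gdi : inGamma p (gdi p) by apply: Gamma_gdi.
have AAi : A * Ai = 1.
  by rewrite -mulmxE /A /Ai -rho_mul // ga_gai rho1.
have AiA : Ai * A = 1.
  by rewrite -mulmxE /A /Ai -rho_mul // gai_ga rho1.
have DiD : rho b (gdi p) *m rho b (gd p) = 1%:M.
  by rewrite -rho_mul // gdi_gd // rho1.
have DAD : rho b (gd p) *m A *m rho b (gdi p) = A ^+ p.
  by rewrite /A -!rho_mul ?gd_conj // ?rho_pow //; apply: Gamma_mul.
have [K [K0 HK]] := finite_orderish (rho_unitary b Ga) DiD DAD.
have cpow m : rho b (gc p) ^+ m = A ^+ m *m B *m Ai ^+ m *m Bi.
  rewrite -rho_pow ?gc_pow; last exact: Gamma_gc.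
  rewrite !rho_mul ?rho_pow //; by repeat apply: Gamma_mul => //; apply: Gamma_pow.
exists K; split => // m /dvdnP [j ->] m0.
have Aj : A ^+ (p ^ (j * K))%N = A.
  elim: (j) => [|i IH]; first by rewrite mul0n expn0 expr1.
  by rewrite mulSn expnD exprM HK.
have Aij : Ai ^+ (p ^ (j * K))%N = Ai.
  have c : GRing.comm Ai A by rewrite /GRing.comm AiA AAi.
  have := exprMn_comm (p ^ (j * K))%N c; rewrite AiA expr1n Aj => H.
  by rewrite -[LHS]mulr1 -AAi mulrA -H mul1r.
have Hc : rho b (gc p) ^+ (p ^ (j * K))%N = rho b (gc p).
  by rewrite cpow Aj Aij -(expr1 A) -(expr1 Ai) -cpow expr1.
have jK : (j * K = (j * K).-1.+1)%N by rewrite prednK.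
rewrite -{1}Hc {1}jK expnS exprM -rho_pow ?gc_p //; exact: Gamma_gc.
Qed.

End Rep.

Theorem proposition8p3 (p : nat) : prime p -> ~ amalgam_MAP p.
Proof.
move=> pp HM; have p_gt0 := prime_gt0 pp.
have Vw : valid_word p [:: (true, gc p); (false, gci p)].
  by apply: valid2; [apply: Gamma_gc | apply: Gamma_gci].
have [n [f [Hf Hne]]] := HM _ Vw (w0_nontriv p_gt0 pp).
apply: Hne; case: n f Hf => [|n] f Hf; first by apply/matrixP => [[]].
have [K1 [K1p H1]] := core p_gt0 Hf true.
have [K2 [K2p H2]] := core p_gt0 Hf false.
have m0 : (0 < K1 * K2)%N by rewrite muln_gt0 K1p K2p.
have Gc := Gamma_gc p; have Gci := Gamma_gci p.
have [Hi [Hm Hu]] := Hf.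
rewrite (Hm [:: (true, gc p)] [:: (false, gci p)]); last exact: valid1; last exact: valid1.
rewrite (H1 (K1 * K2)%N) ?dvdn_mulr // (rho_amalg Hf inN_gn (Gamma_gn p)).
rewrite -(H2 (K1 * K2)%N) ?dvdn_mull //.
by rewrite -(rho_mul p_gt0 Hf) // gc_gci (rho1 Hf).
Qed.
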